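(* Let $n\ge1$. Every $n$-qubit unitary of the 11-stage form -H-C-P-C-P-C-H-P-C-P-C- (i.e. a composition, in this order of application, of an $\textsc{H}$-layer, $\textsc{C}$-layer, $\textsc{P}$-layer, $\textsc{C}$-layer, $\textsc{P}$-layer, $\textsc{C}$-layer, $\textsc{H}$-layer, $\textsc{P}$-layer, $\textsc{C}$-layer, $\textsc{P}$-layer, $\textsc{C}$-layer) can be written in the 8-stage form -H-C-CZ-P-H-P-CZ-C-, i.e. as a composition, in this order of application, of an $\textsc{H}$-layer, a $\textsc{C}$-layer, a $\textsc{CZ}$-layer, a $\textsc{P}$-layer, an $\textsc{H}$-layer, a $\textsc{P}$-layer, a $\textsc{CZ}$-layer and a $\textsc{C}$-layer.
   Context: Gates: $\textsc{H}=\frac{1}{\sqrt2}\begin{pmatrix}1&1\\1&-1\end{pmatrix}$, $\textsc{P}=\mathrm{diag}(1,i)$, $\textsc{CNOT}|a,b\rangle=|a,a\oplus b\rangle$, $\textsc{CZ}|a,b\rangle=(-1)^{ab}|a,b\rangle$. Layers on $n$ qubits: an $\textsc{H}$-layer is $\bigotimes_{j} \textsc{H}^{b_j}$, $b_j\in\{0,1\}$; a $\textsc{P}$-layer is $\bigotimes_{j} \textsc{P}^{a_j}$, $a_j\in\{0,1,2,3\}$; a $\textsc{C}$-layer is any unitary implemented by a circuit of $\textsc{CNOT}$ gates (equivalently $|x\rangle\mapsto|Ax\rangle$, $A$ invertible over $\mathbb F_2$); a $\textsc{CZ}$-layer is any product of $\textsc{CZ}$ gates on pairs of qubits. Stage notation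 -X-Y-...- lists stages in order of application (leftmost applied first). *)

(* Defs.v *)
(* Quantum operators on n qubits are complex (algC) matrices
   whose rows/columns are indexed by computational basis states, i.e. by
   column vectors x : 'cV['F_2]_n (enumerated via enum_val). *)
From HB Require Import structures.
From mathcomp Require Import all_boot all_order all_algebra all_field.
Set Implicit Arguments. Unset Strict Implicit. Unset Printing Implicit Defensive.
Import Order.TTheory GRing.Theory Num.Theory.
Local Open Scope ring_scope.

Notation bits n := ('cV['F_2]_n).
Notation op n := ('M[algC]_(#|{: bits n}|)).

Definition mx_of n (f : bits n -> bits n -> algC) : op n :=
  \matrix_(i, j) f (enum_val i) (enum_val j).

Definition hgate (b : bool) (u v : 'F_2) : algC :=
  if b then (-1) ^+ (nat_of_ord u * nat_of_ord v) / sqrtC 2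
  else (u == v)%:R.

Definition Hlayer n (b : {ffun 'I_n -> bool}) : op n :=
  mx_of (fun x y => \prod_(j < n) hgate (b j) (x j 0) (y j 0)).

Definition Player n (a : {ffun 'I_n -> 'I_4}) : op n :=
  mx_of (fun x y => (x == y)%:R *
                    \prod_(j < n) 'i ^+ (nat_of_ord (a j) * nat_of_ord (x j 0))).

(* C-layer  |y> |-> |A y>  (A is required to be invertible where used) *)
Definition Clayer n (A : 'M['F_2]_n) : op n :=
  mx_of (fun x y => (x == A *m y)%:R).

(* CZ-layer: the product of the CZ gates on the pairs listed in s
   (each pair must consist of two distinct qubits, where used) *)
Definition CZlayer n (s : seq ('I_n * 'I_n)) : op n :=
  mx_of (fun x y => (x == y)%:R *
    \prod_(p <- s) (-1) ^+ (nat_of_ord (x p.1 0) * nat_of_ord (x p.2 0))).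

Definition CZpairs_ok n (s : seq ('I_n * 'I_n)) : bool :=
  all (fun p => p.1 != p.2) s.

(* Main.v *)
Require Import Defs.
From HB Require Import structures.
From mathcomp Require Import all_boot all_order all_algebra all_field.
Import Order.TTheory GRing.Theory Num.Theory.
Set Implicit Arguments. Unset Strict Implicit.
Local Open Scope ring_scope.

Definition Dg n (f : bits n -> algC) : op n :=
  mx_of (fun x y => (x == y)%:R * f x).

Lemma mx_of_ext n (F G : bits n -> bits n -> algC) :
  (forall x y, F x y = G x y) -> mx_of F = mx_of G.
Proof. by move=> e; apply/matrixP => i j; rewrite !mxE e. Qed.

Lemma mul_mx_of n (F G : bits n -> bits n -> algC) :
  mx_of F *m mx_of G = mx_of (fun x z => \sum_y F x y * G y z).
Proof.
apply/matrixP => i k; rewrite !mxE.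
rewrite (big_enum_val (fun y => F (enum_val i) y * G y (enum_val k))) /=.
by apply: eq_bigr => j _; rewrite !mxE.
Qed.

Lemma Dg_ext n (f g : bits n -> algC) : (forall x, f x = g x) -> Dg f = Dg g.
Proof. by move=> e; apply: mx_of_ext => x y; rewrite e. Qed.

Lemma Dg_mul n (f g : bits n -> algC) : Dg f *m Dg g = Dg (fun x => f x * g x).
Proof.
rewrite mul_mx_of; apply: mx_of_ext => x z.
rewrite (bigD1 x) //= big1 ?addr0 => [|y /negbTE]; last by rewrite eq_sym => ->; rewrite !mul0r.
by rewrite eqxx mul1r; case: eqP => [->|]; rewrite ?mul1r ?mul0r ?mulr0 // mulrA.
Qed.

Lemma C_mul n (A B : 'M['F_2]_n) : Clayer A *m Clayer B = Clayer (A *m B).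
Proof.
rewrite mul_mx_of; apply: mx_of_ext => x z.
rewrite (bigD1 (B *m z)) //= big1 ?addr0 => [|y /negbTE ->]; last by rewrite mulr0.
by rewrite eqxx mulr1 mulmxA.
Qed.

Lemma Dg_C n (f : bits n -> algC) (A : 'M['F_2]_n) :
  Dg f *m Clayer A = Clayer A *m Dg (fun y => f (A *m y)).
Proof.
rewrite !mul_mx_of; apply: mx_of_ext => x z.
have -> : \sum_y (x == y)%:R * f x * (y == A *m z)%:R = f x * (x == A *m z)%:R :> algC.
  rewrite (bigD1 x) //= big1 ?addr0 => [|y /negbTE]; last by rewrite eq_sym => ->; rewrite !mul0r.
  by rewrite eqxx mul1r.
have -> : \sum_y (x == A *m y)%:R * ((y == z)%:R * f (A *m y)) = (x == A *m z)%:R * f (A *m z) :> algC.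
  rewrite (bigD1 z) //= big1 ?addr0 => [|y /negbTE]; last by move=> ->; rewrite mul0r mulr0.
  by rewrite eqxx mul1r.
by case: eqP => [->|]; rewrite ?mulr1 ?mul1r ?mul0r ?mulr0.
Qed.

Lemma C_Dg n (g : bits n -> algC) (A : 'M['F_2]_n) : A \in unitmx ->
  Clayer A *m Dg g = Dg (fun x => g (invmx A *m x)) *m Clayer A.
Proof.
move=> uA; rewrite Dg_C; congr (_ *m _); apply: Dg_ext => y.
by rewrite mulmxA mulVmx // mul1mx.
Qed.
From mathcomp Require Import ring.

Definition pf n (a : {ffun 'I_n -> 'I_4}) (x : bits n) : algC :=
  \prod_(j < n) 'i ^+ (nat_of_ord (a j) * nat_of_ord (x j 0)).
Definition czf n (s : seq ('I_n * 'I_n)) (x : bits n) : algC :=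
  \prod_(p <- s) (-1) ^+ (nat_of_ord (x p.1 0) * nat_of_ord (x p.2 0)).

Lemma Player_Dg n (a : {ffun 'I_n -> 'I_4}) : Player a = Dg (pf a).
Proof. by []. Qed.
Lemma CZlayer_Dg n (s : seq ('I_n * 'I_n)) : CZlayer s = Dg (czf s).
Proof. by []. Qed.

Definition good n (f : bits n -> algC) :=
  (forall x, f x ^+ 4 = 1) /\ exists beta : bits n -> bits n -> algC,
   [/\ forall x y, beta x y ^+ 2 = 1,
       forall x x' y, beta (x + x') y = beta x y * beta x' y
     & forall x y, f (x + y) = f x * f y * beta x y].

Lemma F2_cases (u : 'F_2) : u = 0 \/ u = 1.
Proof.
case: u => [[|[|m]] Hm]; [left|right|]; try by apply/val_inj.
by [].
Qed.

Lemma F2_11 : (1 + 1 : 'F_2) = 0. Proof. by apply/val_inj. Qed.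
Lemma F2_v0 : nat_of_ord (0 : 'F_2) = 0%N. Proof. by []. Qed.
Lemma F2_v1 : nat_of_ord (1 : 'F_2) = 1%N. Proof. by []. Qed.

Lemma N1_2 : (-1 : algC) ^+ 2 = 1. Proof. exact: (sqrr_sign _ 1). Qed.
Lemma N1_4 : (-1 : algC) ^+ 4 = 1. Proof. by rewrite (exprM _ 2 2) N1_2 expr1n. Qed.
Lemma i_4 : ('i : algC) ^+ 4 = 1. Proof. by rewrite (exprM _ 2 2) sqrCi N1_2. Qed.

Lemma N1_dbl (w : nat) : (-1 : algC) ^+ w * (-1) ^+ w = 1.
Proof. by rewrite -exprD -signr_odd addnn odd_double. Qed.

Ltac bits := repeat match goal with
  | u : 'F_2 |- _ => case: (F2_cases u) => ->; clear u end;
  rewrite ?F2_11 ?addr0 ?add0r ?F2_v0 ?F2_v1 ?muln0 ?mul0n ?muln1 ?mul1n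
          ?expr0 ?mulr1 ?mul1r.

Lemma L_sl (u v : 'F_2) (w : nat) :
  (-1 : algC) ^+ ((u + v)%R * w) = (-1) ^+ (u * w) * (-1) ^+ (v * w).
Proof. by bits; rewrite ?N1_dbl. Qed.

Lemma L_sr (u v : 'F_2) (w : nat) :
  (-1 : algC) ^+ (w * (u + v)%R) = (-1) ^+ (w * u) * (-1) ^+ (w * v).
Proof. by rewrite mulnC L_sl !(mulnC w). Qed.

Lemma L_i (a : nat) (u v : 'F_2) :
  ('i : algC) ^+ (a * (u + v)%R) = 'i ^+ (a * u) * 'i ^+ (a * v) * (-1) ^+ (a * u * v).
Proof.
bits => //.
by rewrite -!exprMn -expr2 sqrCi mulN1r opprK expr1n.
Qed.

Lemma good_mul n (f g : bits n -> algC) : good f -> good g ->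
  good (fun x => f x * g x).
Proof.
move=> [f4 [bf [bf2 bfl bfe]]] [g4 [bg [bg2 bgl bge]]]; split.
  by move=> x; rewrite exprMn f4 g4 mulr1.
exists (fun x y => bf x y * bg x y); split.
- by move=> x y; rewrite exprMn bf2 bg2 mulr1.
- by move=> x x' y; rewrite bfl bgl; ring.
- by move=> x y; rewrite bfe bge; ring.
Qed.

Lemma good_comp n (f : bits n -> algC) (M : 'M['F_2]_n) : good f ->
  good (fun x => f (M *m x)).
Proof.
move=> [f4 [bf [bf2 bfl bfe]]]; split; first by [].
exists (fun x y => bf (M *m x) (M *m y)); split.
- by [].
- by move=> x x' y; rewrite mulmxDr bfl.
- by move=> x y; rewrite mulmxDr bfe.
Qed.

Lemma good_pf n (a : {ffun 'I_n -> 'I_4}) : good (pf a).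
Proof.
split.
  move=> x; rewrite /pf -prodrXl big1 // => j _.
  by rewrite exprAC i_4 expr1n.
exists (fun x y : bits n => \prod_(j < n) (-1) ^+ (nat_of_ord (a j) * x j 0 * y j 0)); split.
- move=> x y; rewrite -prodrXl big1 // => j _.
  by rewrite exprAC N1_2 expr1n.
- move=> x x' y; rewrite -big_split; apply: eq_bigr => j _ /=.
  rewrite mxE mulnAC L_sr.
  by rewrite (mulnAC _ (y j 0 : nat) (x j 0)) (mulnAC _ (y j 0 : nat) (x' j 0)).
- move=> x y; rewrite /pf -!big_split; apply: eq_bigr => j _ /=.
  rewrite mxE L_i. reflexivity.
Qed.

Lemma AC4 (a b c d : algC) : a * b * (c * d) = a * d * (b * c).
Proof. ring. Qed.

Lemma good_czf n (s : seq ('I_n * 'I_n)) : good (czf s).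
Proof.
split.
  move=> x; rewrite /czf -prodrXl; apply: big1 => j _.
  by rewrite exprAC N1_4 expr1n.
exists (fun x y : bits n => \prod_(p <- s) ((-1 : algC) ^+ (nat_of_ord (x p.1 0) * nat_of_ord (y p.2 0))
                 * (-1 : algC) ^+ (nat_of_ord (y p.1 0) * nat_of_ord (x p.2 0)))); split.
- move=> x y; rewrite -prodrXl; apply: big1 => j _.
  by rewrite exprMn !sqrr_sign mulr1.
- move=> x x' y; rewrite -big_split; apply: eq_bigr => j _ /=.
  by rewrite !mxE L_sl L_sr mulrACA.
- move=> x y; rewrite /czf -!big_split; apply: eq_bigr => j _ /=.
  by rewrite !mxE L_sl !L_sr AC4.
Qed.
Lemma one_neq_m1 : (1 : algC) != -1.
Proof.
apply/eqP => h; have : (2%:R : algC) == 0.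
  by rewrite -addn1 natrD mulr1n {1}h addNr.
by rewrite pnatr_eq0.
Qed.
Lemma sq1 (b : algC) : b ^+ 2 = 1 -> b = 1 \/ b = -1.
Proof.
move=> h; have : (b - 1) * (b + 1) == 0.
  have -> : (b - 1) * (b + 1) = b ^+ 2 - 1 by ring.
  by rewrite h subrr.
by rewrite mulf_eq0 subr_eq0 addr_eq0 => /orP [] /eqP ->; [left|right].
Qed.
Lemma root4 (z : algC) : z ^+ 4 = 1 -> exists k : 'I_4, z = 'i ^+ k.
Proof.
move=> h; have : (z - 1) * (z + 1) * ((z - 'i) * (z + 'i)) == 0.
  have -> : (z - 'i) * (z + 'i) = z ^+ 2 - 'i ^+ 2 by ring.
  rewrite sqrCi.
  have -> : (z - 1) * (z + 1) * (z ^+ 2 - -1) = z ^+ 4 - 1 by ring.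
  by rewrite h subrr.
rewrite !mulf_eq0 !subr_eq0 !addr_eq0 => /orP [/orP [] | /orP []] /eqP ->.
- by exists (@Ordinal 4 0 isT); rewrite expr0.
- by exists (@Ordinal 4 2 isT); rewrite /= sqrCi.
- by exists (@Ordinal 4 1 isT); rewrite expr1.
- by exists (@Ordinal 4 3 isT); rewrite /= exprS sqrCi mulrN1.
Qed.

Lemma ie_sorted n : sorted (fun i j : 'I_n => (i < j)%N) (index_enum 'I_n).
Proof.
have -> : index_enum 'I_n = ord_enum n by rewrite /index_enum !unlock.
by have := iota_ltn_sorted 0 n; rewrite -val_ord_enum sorted_map.
Qed.

Section Decode.
Variables (n : nat) (f : bits n -> algC) (beta : bits n -> bits n -> algC).
Hypotheses (f4 : forall x, f x ^+ 4 = 1) (b2 : forall x y, beta x y ^+ 2 = 1)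
  (bl : forall x x' y, beta (x + x') y = beta x y * beta x' y)
  (fe : forall x y, f (x + y) = f x * f y * beta x y).

Lemma fnz x : f x != 0.
Proof. apply/eqP => h; have := f4 x; rewrite h expr0n /= => /eqP; by rewrite eq_sym oner_eq0. Qed.

Lemma bnz x y : beta x y != 0.
Proof. apply/eqP => h; have := b2 x y; rewrite h expr0n /= => /eqP; by rewrite eq_sym oner_eq0. Qed.

Lemma b0l y : beta 0 y = 1.
Proof.
have h := bl 0 0 y; rewrite addr0 in h.
by apply: (mulfI (bnz 0 y)); rewrite mulr1 -h.
Qed.

Lemma f0 : f 0 = 1.
Proof.
have h := fe 0 0; rewrite addr0 b0l mulr1 in h.
by apply: (mulfI (fnz 0)); rewrite mulr1 -h.
Qed.

Lemma bsym x y : beta x y = beta y x.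
Proof.
have h := fe x y; rewrite addrC fe (mulrC (f y)) in h.
by apply: (mulfI (mulf_neq0 (fnz x) (fnz y))).
Qed.

Lemma b0r x : beta x 0 = 1.
Proof. by rewrite bsym b0l. Qed.

Lemma br x y y' : beta x (y + y') = beta x y * beta x y'.
Proof. by rewrite bsym bl !(bsym x). Qed.

Lemma bsum x (r : seq 'I_n) (F : 'I_n -> bits n) :
  beta x (\sum_(k <- r) F k) = \prod_(k <- r) beta x (F k).
Proof. by apply: (big_morph (beta x) (br x) (b0r x)). Qed.

Lemma expand (r : seq 'I_n) (F : 'I_n -> bits n) :
  sorted (fun i j : 'I_n => (i < j)%N) r ->
  f (\sum_(j <- r) F j) =
  \prod_(j <- r) (f (F j) * \prod_(k <- r | (j < k)%N) beta (F j) (F k)).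
Proof.
elim: r => [|j0 r IH] Hs; first by rewrite !big_nil f0.
have Hall : all (fun k : 'I_n => (j0 < k)%N) r.
  by apply: (order_path_min _ Hs) => a b c; apply: ltn_trans.
have Hr : sorted (fun i j : 'I_n => (i < j)%N) r by apply: (path_sorted Hs).
rewrite !big_cons fe IH // ltnn /=.
have -> : \prod_(k <- r | (j0 < k)%N) beta (F j0) (F k) = \prod_(k <- r) beta (F j0) (F k).
  rewrite big_seq_cond [RHS]big_seq_cond; apply: eq_bigl => k.
  by case kr: (k \in r); rewrite //= (allP Hall k kr).
have -> : \prod_(j <- r) (f (F j) * \prod_(k <- j0 :: r | (j < k)%N) beta (F j) (F k)) =
          \prod_(j <- r) (f (F j) * \prod_(k <- r | (j < k)%N) beta (F j) (F k)).
  apply: eq_big_seq => j jr; rewrite big_cons.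
  have -> : (j < j0)%N = false by rewrite ltnNge ltnW // (allP Hall j jr).
  by [].
rewrite bsum.
by rewrite mulrAC.
Qed.

End Decode.

Lemma decode n (f : bits n -> algC) : good f ->
  exists (a : {ffun 'I_n -> 'I_4}) (s : seq ('I_n * 'I_n)),
    CZpairs_ok s /\ forall x, f x = pf a x * czf s x.
Proof.
move=> [f4 [beta [b2 bl fe]]].
have F0 : f 0 = 1 by apply: (f0 (beta:=beta)).
have B0l : forall y, beta 0 y = 1 by move=> y; apply: (b0l (beta:=beta)).
have B0r : forall y, beta y 0 = 1 by move=> y; apply: (b0r (beta:=beta)).
pose e (j : 'I_n) : bits n := delta_mx j 0.
have [a0 Ha] := @fin_all_exists _ (fun _ => 'I_4) (fun j k => f (e j) = 'i ^+ k)
  (fun j => root4 (f4 (e j))).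
pose s := [seq p : 'I_n * 'I_n <- index_enum ('I_n * 'I_n)%type |
             ((p.1 < p.2)%N && (beta (e p.1) (e p.2) == -1))].
exists [ffun j => a0 j], s; split.
  apply/allP => p; rewrite mem_filter => /andP [/andP [lt _] _].
  by apply/eqP => E; move: lt; rewrite E ltnn.
move=> x.
have fs : forall (u : 'F_2) v, f (u *: v) = f v ^+ u.
  by move=> u v; case: (F2_cases u) => ->; rewrite ?scale0r ?scale1r ?F0 ?expr0 ?expr1.
have bs : forall (u w : 'F_2) v z, beta (u *: v) (w *: z) = beta v z ^+ (u * w).
  move=> u w v z; case: (F2_cases u) => ->; case: (F2_cases w) => ->;
  by rewrite ?scale0r ?scale1r ?B0l ?B0r ?expr0 ?expr1.
have xd : x = \sum_(j < n) x j 0 *: e j.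
  by rewrite {1}(matrix_sum_delta x); apply: eq_bigr => j _; rewrite big_ord1.
rewrite {1}xd (expand (beta:=beta)) ?ie_sorted //.
rewrite /pf /czf big_split /=.
congr (_ * _).
  by apply: eq_bigr => j _; rewrite fs Ha ffunE -exprM.
transitivity (\prod_(p : 'I_n * 'I_n | (p.1 < p.2)%N)
                 beta (e p.1) (e p.2) ^+ (x p.1 0 * x p.2 0)).
  by rewrite pair_big_dep /=; apply: eq_bigr => p _; exact: bs.
rewrite big_filter big_mkcond [RHS]big_mkcond; apply: eq_bigr => p _ /=.
case: ltnP => //= _.
by case: (sq1 (b2 (e p.1) (e p.2))) => ->; rewrite ?eqxx ?(negbTE one_neq_m1) ?expr1n.
Qed.

Theorem mainTheorem3 (n : nat) (hn : (0 < n)%N)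
  (b1 : {ffun 'I_n -> bool}) (A1 : 'M['F_2]_n) (a1 : {ffun 'I_n -> 'I_4})
  (A2 : 'M['F_2]_n) (a2 : {ffun 'I_n -> 'I_4}) (A3 : 'M['F_2]_n)
  (b2 : {ffun 'I_n -> bool}) (a3 : {ffun 'I_n -> 'I_4}) (A4 : 'M['F_2]_n)
  (a4 : {ffun 'I_n -> 'I_4}) (A5 : 'M['F_2]_n) :
  A1 \in unitmx -> A2 \in unitmx -> A3 \in unitmx -> A4 \in unitmx ->
  A5 \in unitmx ->
  exists (b1' : {ffun 'I_n -> bool}) (C1 : 'M['F_2]_n)
         (s1 : seq ('I_n * 'I_n)) (p1 : {ffun 'I_n -> 'I_4})
         (b2' : {ffun 'I_n -> bool}) (p2 : {ffun 'I_n -> 'I_4})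
         (s2 : seq ('I_n * 'I_n)) (C2 : 'M['F_2]_n),
    [/\ C1 \in unitmx, C2 \in unitmx, CZpairs_ok s1, CZpairs_ok s2 &
      Clayer A5 *m Player a4 *m Clayer A4 *m Player a3 *m Hlayer b2
        *m Clayer A3 *m Player a2 *m Clayer A2 *m Player a1 *m Clayer A1
        *m Hlayer b1
      = Clayer C2 *m CZlayer s2 *m Player p2 *m Hlayer b2' *m Player p1
        *m CZlayer s1 *m Clayer C1 *m Hlayer b1'].
Proof.
move=> u1 u2 u3 u4 u5.
have u32 : A3 *m A2 \in unitmx by rewrite unitmx_mul u3 u2.
pose g2 := fun x => pf a4 (A4 *m x) * pf a3 x.
pose g1 := fun x => pf a2 (invmx A3 *m x) * pf a1 (invmx (A3 *m A2) *m x).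
have gg2 : good g2 by apply: good_mul; [apply: (good_comp _ (good_pf a4)) | apply: good_pf].
have gg1 : good g1 by apply: good_mul; apply: good_comp; apply: good_pf.
have [p2 [s2 [ok2 e2]]] := decode gg2.
have [p1 [s1 [ok1 e1]]] := decode gg1.
have HU : forall X : op n, Clayer A5 *m (Player a4 *m (Clayer A4 *m (Player a3 *m X)))
    = Clayer (A5 *m A4) *m (Dg g2 *m X).
  move=> X; rewrite !mulmxA; apply: (congr1 (mulmx^~ X)).
  rewrite !Player_Dg -(mulmxA (Clayer A5)) Dg_C mulmxA C_mul -mulmxA Dg_mul.
  by apply: (congr1 (mulmx _)); apply: Dg_ext.
have HL : forall X : op n,
    Clayer A3 *m (Player a2 *m (Clayer A2 *m (Player a1 *m (Clayer A1 *m X))))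
    = Dg g1 *m (Clayer (A3 *m A2 *m A1) *m X).
  move=> X; rewrite !mulmxA; apply: (congr1 (mulmx^~ X)).
  rewrite !Player_Dg (C_Dg _ u3) -(mulmxA (Dg _)) C_mul -(mulmxA (Dg _)).
  rewrite (C_Dg _ u32) mulmxA Dg_mul -mulmxA C_mul.
  by apply: (congr1 (mulmx^~ _)); apply: Dg_ext.
have H2 : forall X : op n, CZlayer s2 *m (Player p2 *m X) = Dg g2 *m X.
  move=> X; rewrite mulmxA CZlayer_Dg Player_Dg Dg_mul; apply: (congr1 (mulmx^~ X)).
  by apply: Dg_ext => x; rewrite e2 mulrC.
have H1 : forall X : op n, Player p1 *m (CZlayer s1 *m X) = Dg g1 *m X.
  move=> X; rewrite mulmxA CZlayer_Dg Player_Dg Dg_mul; apply: (congr1 (mulmx^~ X)).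
  by apply: Dg_ext => x; rewrite e1.
exists b1, (A3 *m A2 *m A1), s1, p1, b2, p2, s2, (A5 *m A4); split.
- by rewrite !unitmx_mul u1 u2 u3.
- by rewrite unitmx_mul u4 u5.
- exact: ok1.
- exact: ok2.
rewrite -!mulmxA HU HL H2 H1 (mulmxA A3 A2 A1).
reflexivity.
Qed.
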